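(* If $S$ and $T$ are infinite monoids, then the direct product $S\times T$ is not $U(\mathrm{CF})$.
   Context: For a monoid $M$ generated by a finite set $A$, $\mathrm{WP}(M,A)=\{u\#v^{\mathrm{rev}} : u,v\in A^*,\ u=_M v\}$, where $\#\notin A$ and $v^{\mathrm{rev}}$ is the reversal of $v$. A monoid is $U(\mathrm{CF})$ if it is finitely generated and its word problem with respect to some (equivalently any) finite generating set is context-free. *)

(* Defs.v *)
From Stdlib Require Import List.
From mathcomp Require Import all_boot.
Set Implicit Arguments. Unset Strict Implicit. Unset Printing Implicit Defensive.

Record monoid := Monoid {
  mcarrier :> Type;
  mmul : mcarrier -> mcarrier -> mcarrier;
  mone : mcarrier;
  mmulA : forall x y z, mmul x (mmul y z) = mmul (mmul x y) z;
  mmul1 : forall x, mmul mone x = x;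
  mmulm1 : forall x, mmul x mone = x }.

Definition prod_monoid (S T : monoid) : monoid.
Proof.
refine (@Monoid (S * T)%type
  (fun p q => (mmul p.1 q.1, mmul p.2 q.2)) (mone S, mone T) _ _ _).
- by move=> [a b] [c d] [e f] /=; rewrite !mmulA.
- by move=> [a b] /=; rewrite !mmul1.
- by move=> [a b] /=; rewrite !mmulm1.
Defined.

Definition infinite_monoid (M : monoid) : Prop :=
  ~ exists s : list M, forall x : M, List.In x s.

Definition eval_word (M : monoid) (A : Type) (gen : A -> M) (w : seq A) : M :=
  foldr (fun a m => mmul (gen a) m) (mone M) w.

Definition generates (M : monoid) (A : Type) (gen : A -> M) : Prop :=
  forall x : M, exists w : seq A, eval_word gen w = x.

(* The word problem WP(M,A) = { u # rev v : u =_M v }, over the alphabet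
   option A, where None plays the role of the fresh symbol #. *)
Definition word_problem (M : monoid) (A : Type) (gen : A -> M)
  (w : seq (option A)) : Prop :=
  exists u v : seq A, eval_word gen u = eval_word gen v /\
    w = map Some u ++ None :: map Some (rev v).

Record cfg (Sigma : finType) := CFG {
  nonterm : finType;
  rules : seq (nonterm * seq (nonterm + Sigma));
  start : nonterm }.

Definition derive1 (Sigma : finType) (G : cfg Sigma)
  (u v : seq (nonterm G + Sigma)) : Prop :=
  exists (x y : seq (nonterm G + Sigma)) (X : nonterm G) rhs,
    (X, rhs) \in rules G /\ u = x ++ inl X :: y /\ v = x ++ rhs ++ y.

Inductive derives (Sigma : finType) (G : cfg Sigma) :
  seq (nonterm G + Sigma) -> seq (nonterm G + Sigma) -> Prop :=
| derives_refl u : @derives Sigma G u u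
| derives_step u v w : @derive1 Sigma G u v -> @derives Sigma G v w -> @derives Sigma G u w.

Definition cfg_lang (Sigma : finType) (G : cfg Sigma) (w : seq Sigma) : Prop :=
  @derives Sigma G [:: inl (start G)] (map inr w).

Definition context_free (Sigma : finType) (L : seq Sigma -> Prop) : Prop :=
  exists G : cfg Sigma, forall w, L w <-> cfg_lang G w.

Definition UCF (M : monoid) : Prop :=
  exists (A : finType) (gen : A -> M),
    injective gen /\ generates gen /\
    context_free (word_problem gen).

(* Main.v *)
Require Import Defs.
From Stdlib Require Import Classical IndefiniteDescription Lia.
From mathcomp Require Import all_boot zify.
Set Implicit Arguments. Unset Strict Implicit. Unset Printing Implicit Defensive.


Lemma map_eq_catP (T1 T2 : Type) (f : T1 -> T2) s g1 g2 : map f s = g1 ++ g2 ->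
  exists s1 s2, s = s1 ++ s2 /\ g1 = map f s1 /\ g2 = map f s2.
Proof.
move=> E; exists (take (size g1) s), (drop (size g1) s); rewrite cat_take_drop.
by rewrite map_take map_drop E take_size_cat ?drop_size_cat.
Qed.

Lemma cat_cons_split (T : Type) (a b x y : seq T) e : a ++ b = x ++ e :: y ->
  (exists y1, a = x ++ e :: y1 /\ y = y1 ++ b) \/ (exists x2, x = a ++ x2 /\ b = x2 ++ e :: y).
Proof.
elim: a x => [|c a IH] x /=.
- by move=> E; right; exists x.
- case: x => [|d x] /=.
  + case=> -> <-; left; by exists a.
  + case=> -> /IH [[y1 [-> ->]]|[x2 [-> ->]]]; [left; by exists y1 | right; by exists x2].
Qed.

Section Grammar.
Variables (Sigma : finType) (G : cfg Sigma).
Local Notation sym := (nonterm G + Sigma)%type.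

Fixpoint derivesn (n : nat) (u v : seq sym) : Prop :=
  match n with 0 => u = v | n'.+1 => exists u', @derive1 _ G u u' /\ derivesn n' u' v end.

Lemma derives_n u v : @derives _ G u v -> exists n, derivesn n u v.
Proof. elim=> [w|x y w H _ [n Hn]]; [by exists 0| by exists n.+1; exists y]. Qed.

Lemma derivesn_derives n u v : derivesn n u v -> @derives _ G u v.
Proof.
elim: n u => [u /= ->|n IH u [u' [H1 H2]]]; first exact: derives_refl.
exact: derives_step H1 (IH _ H2).
Qed.

Lemma derive1_ctx p s u v : @derive1 _ G u v -> @derive1 _ G (p ++ u ++ s) (p ++ v ++ s).
Proof.
case=> x [y [X [rhs [Hr [-> ->]]]]]. exists (p ++ x), (y ++ s), X, rhs; split=> //.
by rewrite -!catA.
Qed.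

Lemma derivesn_ctx n p s u v : derivesn n u v -> derivesn n (p ++ u ++ s) (p ++ v ++ s).
Proof.
elim: n u => [u /= -> //|n IH u [u' [H1 H2]]].
exists (p ++ u' ++ s); split; [exact: derive1_ctx | exact: IH].
Qed.

Lemma derivesn_trans n1 n2 u v w : derivesn n1 u v -> derivesn n2 v w -> derivesn (n1 + n2) u w.
Proof.
elim: n1 u => [u /= -> //|n IH u [u' [H1 H2]] H3].
exists u'; split=> //; exact: IH.
Qed.

Lemma derivesn_cat n1 n2 a1 a2 b1 b2 : derivesn n1 a1 b1 -> derivesn n2 a2 b2 ->
  derivesn (n1 + n2) (a1 ++ a2) (b1 ++ b2).
Proof.
move=> H1 H2. apply: (derivesn_trans (v := b1 ++ a2)).
- exact: (derivesn_ctx [::] a2 H1).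
- by have := derivesn_ctx b1 [::] H2; rewrite !cats0.
Qed.

Lemma derivesn_split n a b g : derivesn n (a ++ b) g -> exists n1 n2 g1 g2,
  n = n1 + n2 /\ g = g1 ++ g2 /\ derivesn n1 a g1 /\ derivesn n2 b g2.
Proof.
elim: n a b => [|n IH] a b /=.
- move=> <-; by exists 0, 0, a, b.
- move=> [u' [[x [y [X [rhs [Hr [E ->]]]]]] H]].
  case: (cat_cons_split E) => [[y1 [E1 E2]]|[x2 [E1 E2]]]; subst.
  + have := IH (x ++ rhs ++ y1) b; rewrite -!catA => /(_ H).
    move=> [n1 [n2 [g1 [g2 [-> [-> [H1 H2]]]]]]].
    exists n1.+1, n2, g1, g2; split=> //; split=> //; split=> //.
    exists (x ++ rhs ++ y1); split=> //. by exists x, y1, X, rhs.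
  + have := IH a (x2 ++ rhs ++ y); rewrite -!catA in H => /(_ H).
    move=> [n1 [n2 [g1 [g2 [-> [-> [H1 H2]]]]]]].
    exists n1, n2.+1, g1, g2; split; first by rewrite addnS. split=> //; split=> //.
    exists (x2 ++ rhs ++ y); split=> //. by exists x2, y, X, rhs.
Qed.

Lemma derivesn_term n w g : derivesn n (map inr w) g -> n = 0 /\ g = map inr w.
Proof.
case: n => [/= -> //|n /= [u' [[x [y [X [rhs [_ [E _]]]]]] _]]].
have : inl X \in map inr w by rewrite E mem_cat in_cons eqxx orbT.
by case/mapP.
Qed.

Lemma derivesn_nt n X w : derivesn n [:: inl X] (map inr w) ->
  exists m rhs, n = m.+1 /\ (X, rhs) \in rules G /\ derivesn m rhs (map inr w).
Proof.
case: n => [/=|m /= [u' [[x [y [X' [rhs [Hr [E ->]]]]]] H]]].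
- by case: w.
- case: x E H => [|c x] /=.
  + case=> EX Ey H; subst; exists m, rhs; split=> //; split=> //; by rewrite cats0 in H.
  + by case=> _; case: x.
Qed.

Lemma rule_step m X rhs g : (X, rhs) \in rules G -> derivesn m rhs g -> derivesn m.+1 [:: inl X] g.
Proof. move=> Hr H; exists rhs; split=> //; exists [::], [::], X, rhs; by rewrite cats0. Qed.

Section Pump.
Variables (F : finType) (col : nat -> F).
Definition bb := foldr (fun r m => size r.2 + m) 2 (rules G).
Local Notation Lab := (nonterm G * F * F)%type.
Definition cc := #|{: Lab}|.
Definition PP := bb ^ cc.+1.

Lemma bb_rhs X rhs : (X, rhs) \in rules G -> size rhs <= bb.
Proof.
rewrite /bb; elim: (rules G) => //= r rs IH; rewrite in_cons => /orP [/eqP <- /=| /IH]; lia.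
Qed.

Lemma bb_gt1 : 1 < bb.
Proof. rewrite /bb; elim: (rules G) => //= r rs IH; lia. Qed.

Definition Pump (rhs : seq sym) (a : nat) (w : seq Sigma) (n : nat) : Prop :=
  exists Z x y z y' q n1 n3, w = x ++ y ++ z ++ y' ++ q /\ n1 + n3 < n /\
    size (y ++ z ++ y') <= PP /\
    col (a + size x) = col (a + size (x ++ y)) /\
    col (a + size (x ++ y ++ z)) = col (a + size (x ++ y ++ z ++ y')) /\
    derivesn n1 rhs (map inr x ++ inl Z :: map inr q) /\
    derivesn n3 [:: inl Z] (map inr z).

Definition RF (rhs : seq sym) (a : nat) (w : seq Sigma) (n : nat) : Prop :=
  exists L : {set Lab}, size w <= size rhs * bb ^ #|L| /\
   forall l, l \in L -> exists Z x z q n1 n3,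
     l = (Z, col (a + size x), col (a + size (x ++ z))) /\ w = x ++ z ++ q /\ n = n1 + n3 /\
     derivesn n1 rhs (map inr x ++ inl Z :: map inr q) /\ derivesn n3 [:: inl Z] (map inr z).

Lemma combine s1 r a w1 w2 m1 m2 :
  derivesn m1 s1 (map inr w1) -> derivesn m2 r (map inr w2) ->
  Pump s1 a w1 m1 \/ RF s1 a w1 m1 ->
  Pump r (a + size w1) w2 m2 \/ RF r (a + size w1) w2 m2 ->
  Pump (s1 ++ r) a (w1 ++ w2) (m1 + m2) \/ RF (s1 ++ r) a (w1 ++ w2) (m1 + m2).
Proof.
move=> D1 D2 [[Z [x [y [z [y' [q [n1 [n3 [Ew [Hn [Hs [C1 [C2 [Dx Dz]]]]]]]]]]]]]] | [L1 [S1 H1]]].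
- move=> _; left. exists Z, x, y, z, y', (q ++ w2), (n1 + m2), n3.
  split; first by rewrite Ew -!catA. split; first lia. do 3 (split => //).
  split=> //. have := derivesn_cat Dx D2. by rewrite map_cat -catA.
- case=> [[Z [x [y [z [y' [q [n1 [n3 [Ew [Hn [Hs [C1 [C2 [Dx Dz]]]]]]]]]]]]]] | [L2 [S2 H2]]].
  + left. exists Z, (w1 ++ x), y, z, y', q, (m1 + n1), n3.
    split; first by rewrite Ew -!catA. split; first lia. split=> //.
    move: C1 C2; rewrite !size_cat !addnA => C1 C2. do 2 (split=> //). split=> //.
    have := derivesn_cat D1 Dx. by rewrite map_cat -catA.
  + right. exists (L1 :|: L2). split.
    * rewrite !size_cat mulnDl. apply: leq_add.
      -- apply: (leq_trans S1); apply: leq_mul => //; apply: leq_pexp2l; first by have := bb_gt1; lia.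
         by apply: subset_leq_card; apply: subsetUl.
      -- apply: (leq_trans S2); apply: leq_mul => //; apply: leq_pexp2l; first by have := bb_gt1; lia.
         by apply: subset_leq_card; apply: subsetUr.
    * move=> l; rewrite in_setU => /orP [/H1 | /H2].
      -- move=> [Z [x [z [q [n1 [n3 [El [Ew [Em [Dx Dz]]]]]]]]]].
         exists Z, x, z, (q ++ w2), (n1 + m2), n3. split=> //. split; first by rewrite Ew -!catA.
         split; first lia. split=> //. have := derivesn_cat Dx D2. by rewrite map_cat -catA.
      -- move=> [Z [x [z [q [n1 [n3 [El [Ew [Em [Dx Dz]]]]]]]]]].
         exists Z, (w1 ++ x), z, q, (m1 + n1), n3. split.
         by rewrite El !size_cat !addnA.
         split; first by rewrite Ew -!catA.
         split; first lia. split=> //. have := derivesn_cat D1 Dx. by rewrite map_cat -catA.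
Qed.

Definition Claim n := forall X a w, derivesn n [:: inl X] (map inr w) ->
  Pump [:: inl X] a w n \/ RF [:: inl X] a w n.

Lemma forest m : (forall k, k <= m -> Claim k) ->
  forall rhs a w, derivesn m rhs (map inr w) -> Pump rhs a w m \/ RF rhs a w m.
Proof.
move=> IH rhs; elim: rhs m IH => [|s r IHr] m IH a w.
- move=> /(@derivesn_term _ [::]) [-> E].
  have -> : w = [::] by case: w E.
  right; exists set0; split=> // l; by rewrite in_set0.
- move=> D; have := derivesn_split (a := [:: s]) (b := r) D.
  move=> [m1 [m2 [g1 [g2 [Em [Eg [D1 D2]]]]]]].
  have [w1 [w2 [Ew [E1 E2]]]] := map_eq_catP Eg. subst. clear Eg.
  have C1 : Pump [:: s] a w1 m1 \/ RF [:: s] a w1 m1.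
    case: s D1 {D} => [Y|t] D1.
    + apply: IH D1; lia.
    + have [E1 E2] := @derivesn_term _ [:: t] _ D1. subst.
      have Ew1 : w1 = [:: t] by move: E2; case: w1 {D1} => [|x [|]] //= [->].
      subst.
      right; exists set0; split; first by rewrite cards0.
      move=> l; by rewrite in_set0.
  have C2 := IHr m2 (fun k hk => IH k (leq_trans hk (leq_addl _ _))) (a + size w1) w2 D2.
  exact: (combine D1 D2 C1 C2).
Qed.

Lemma claim n : Claim n.
Proof.
elim/ltn_ind: n => n IHn X a w D.
have [m [rhs [En [Hr Dm]]]] := derivesn_nt D. subst n.
have := forest (fun k hk => IHn k (leq_ltn_trans hk (ltnSn m))) a Dm.
case=> [[Z [x [y [z [y' [q [n1 [n3 [Ew [Hn [Hs [C1 [C2 [Dx Dz]]]]]]]]]]]]]] | [L [SL HL]]].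
- left. exists Z, x, y, z, y', q, n1.+1, n3. split=> //. split; first lia.
  do 4 (split=> //). exact: rule_step Hr Dx.
- set lX := (X, col a, col (a + size w)).
  case: (boolP (lX \in L)) => Hin.
  + left. have [Z [x [z [q [n1 [n3 [El [Ew [Em [Dx Dz]]]]]]]]]] := HL _ Hin.
    case: El => EZ Ea Eb. subst Z.
    exists X, [::], x, z, q, [::], 0, n3.
    split; first by rewrite Ew cats0.
    split; first lia.
    split.
      rewrite -Ew. apply: (leq_trans SL). rewrite /PP expnS. apply: leq_mul.
      exact: bb_rhs Hr. apply: leq_pexp2l; first by have := bb_gt1; lia. exact: max_card.
    split; first by rewrite addn0.
    split; first by rewrite /= -Ew Eb.
    by split.
  + right. exists (lX |: L). split.
    * rewrite cardsU1 Hin /= mul1n add1n expnS. apply: (leq_trans SL).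
      apply: leq_mul => //; exact: bb_rhs Hr.
    * move=> l; rewrite in_setU1 => /orP [/eqP -> | /HL].
      -- exists X, [::], w, [::], 0, m.+1. split; first by rewrite /lX /= addn0.
         split; first by rewrite cats0. by split.
      -- move=> [Z [x [z [q [n1 [n3 [El [Ew [Em [Dx Dz]]]]]]]]]].
         exists Z, x, z, q, n1.+1, n3. do 2 (split=> //). split; first by rewrite Em.
         split=> //. exact: rule_step Hr Dx.
Qed.

Theorem pumping W : cfg_lang G W -> PP < size W ->
  exists x y z y' q, W = x ++ y ++ z ++ y' ++ q /\ y ++ y' <> [::] /\ size (y ++ z ++ y') <= PP /\
   col (size x) = col (size (x ++ y)) /\ col (size (x ++ y ++ z)) = col (size (x ++ y ++ z ++ y')) /\
   cfg_lang G (x ++ z ++ q).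
Proof.
move=> HW HP. have [n Dn] := derives_n HW.
elim/ltn_ind: n W Dn HW HP => n IHn W Dn HW HP.
have := claim 0 Dn.
case=> [[Z [x [y [z [y' [q [n1 [n3 [Ew [Hn [Hs [C1 [C2 [Dx Dz]]]]]]]]]]]]]] | [L [SL _]]]; last first.
- exfalso. have : size W <= bb ^ cc.
    apply: (leq_trans SL); rewrite mul1n; apply: leq_pexp2l; first by have := bb_gt1; lia.
    exact: max_card.
  have : bb ^ cc <= PP by rewrite /PP expnS; apply: leq_pmull; have := bb_gt1; lia.
  lia.
- have Dxzq : derivesn (n1 + n3) [:: inl (start G)] (map inr (x ++ z ++ q)).
    apply: derivesn_trans Dx _. have := derivesn_ctx (map inr x) (map inr q) Dz. by rewrite !map_cat.
  case: (eqVneq (y ++ y') [::]) => Hyy.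
  + have [Ey Ey'] : y = [::] /\ y' = [::] by move: Hyy; case: y {Ew Hs C1 C2} => //; case: y'.
    subst. by apply: (IHn (n1 + n3) Hn).
  + exists x, y, z, y', q. rewrite !add0n in C1 C2. split; first done. split; first exact/eqP. do 3 (split; first done).
    exact: derivesn_derives Dxzq.
Qed.
End Pump.
End Grammar.


Section Blocks.
Variables (E : Type) (D : eqType) (psi : D -> seq E) (d0 : D).
Definition Psi (X : seq D) := flatten (map psi X).

Fixpoint loc (Bl : seq (seq E)) (p : nat) : nat * nat :=
  match Bl with
  | [::] => (0, p)
  | b :: Bl' => if p < size b then (0, p) else ((loc Bl' (p - size b)).1.+1, (loc Bl' (p - size b)).2)
  end.

Definition colX (X : seq D) (p : nat) : option (D * nat) :=
  if (loc (map psi X) p).1 < size X then Some (nth d0 X (loc (map psi X) p).1, (loc (map psi X) p).2)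
  else None.

Lemma Psi_cat X1 X2 : Psi (X1 ++ X2) = Psi X1 ++ Psi X2.
Proof. by rewrite /Psi map_cat flatten_cat. Qed.

Lemma loc_cat Bl1 Bl2 p : loc (Bl1 ++ Bl2) (size (flatten Bl1) + p) =
  (size Bl1 + (loc Bl2 p).1, (loc Bl2 p).2).
Proof.
elim: Bl1 => [|b Bl1 IH] /=; first by rewrite !add0n; case: (loc Bl2 p).
rewrite size_cat -addnA.
have -> : (size b + (size (flatten Bl1) + p) < size b) = false by apply/negbTE; rewrite -leqNgt leq_addr.
by rewrite addKn IH /= addSn.
Qed.

Lemma loc_mono Bl p1 p2 : p1 <= p2 -> (loc Bl p1).1 <= (loc Bl p2).1.
Proof.
elim: Bl p1 p2 => [|b Bl IH] p1 p2 //= H.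
case: ifP => H1 //. have -> : (p2 < size b) = false by apply/negbTE; lia.
apply: IH; lia.
Qed.

Lemma loc_prop Bl p : p <= size (flatten Bl) ->
  (loc Bl p).1 <= size Bl /\ p = size (flatten (take (loc Bl p).1 Bl)) + (loc Bl p).2 /\
  ((loc Bl p).1 < size Bl -> (loc Bl p).2 < size (nth [::] Bl (loc Bl p).1)) /\
  ((loc Bl p).1 = size Bl -> (loc Bl p).2 = 0).
Proof.
elim: Bl p => [|b Bl IH] p /=.
- by rewrite leqn0 => /eqP ->.
- rewrite size_cat => H. case: ifP => H1 /=.
  + split=> //; split=> //; split=> // _; by rewrite H1.
  + have [A1 [A2 [A3 A4]]] := IH (p - size b) ltac:(lia).
    split; first lia. split; first by rewrite size_cat -addnA -A2; lia.
    split; first by move=> ?; apply: A3; lia.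
    move=> ?; apply: A4; lia.
Qed.

Lemma flat_split (Bl : seq (seq E)) k :
  flatten Bl = flatten (take k Bl) ++ nth [::] Bl k ++ flatten (drop k.+1 Bl).
Proof.
case: (ltnP k (size Bl)) => H.
- by rewrite -{1}(cat_take_drop k Bl) (drop_nth [::] H) flatten_cat.
- by rewrite take_oversize // nth_default // drop_oversize ?cats0 //; lia.
Qed.

Lemma cut X p : p <= size (Psi X) ->
  take p (Psi X) = Psi (take (loc (map psi X) p).1 X) ++ take (loc (map psi X) p).2 (nth [::] (map psi X) (loc (map psi X) p).1) /\
  drop p (Psi X) = drop (loc (map psi X) p).2 (nth [::] (map psi X) (loc (map psi X) p).1) ++ Psi (drop (loc (map psi X) p).1.+1 X).
Proof.
move=> Hp. have [A1 [A2 [A3 A4]]] := loc_prop Hp.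
set k := (loc _ _).1 in A1 A2 A3 A4 *. set o := (loc _ _).2 in A2 A3 A4 *.
have Ho : o <= size (nth [::] (map psi X) k).
  case: (ltnP k (size (map psi X))) => Hk; first by have := A3 Hk; lia.
  have Ek : k = size (map psi X) by lia. by rewrite (A4 Ek).
rewrite /Psi (flat_split _ k) A2 -map_take -map_drop. split.
- rewrite take_cat ltnNge leq_addr /= addKn take_cat.
  case: ltnP => H2 //.
  have Eo : o = size (nth [::] [seq psi i | i <- X] k) by apply/eqP; rewrite eqn_leq Ho H2.
  by rewrite Eo subnn take0 cats0 take_size.
- rewrite drop_cat ltnNge leq_addr /= addKn drop_cat.
  case: ltnP => H2 //.
  have Eo : o = size (nth [::] [seq psi i | i <- X] k) by apply/eqP; rewrite eqn_leq Ho H2.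
  by rewrite Eo subnn drop0 drop_size.
Qed.

Lemma glue X x y r : Psi X = x ++ y ++ r -> colX X (size x) = colX X (size (x ++ y)) ->
  x ++ r = Psi (take (loc (map psi X) (size x)).1 X ++ drop (loc (map psi X) (size (x ++ y))).1 X).
Proof.
move=> EW Hc.
have H1 : size x <= size (Psi X) by rewrite EW !size_cat; lia.
have H2 : size (x ++ y) <= size (Psi X) by rewrite EW !size_cat; lia.
have [T1 _] := cut H1. have [_ T2] := cut H2.
have Ex : x = take (size x) (Psi X) by rewrite EW take_size_cat.
have Er : r = drop (size (x ++ y)) (Psi X) by rewrite EW catA drop_size_cat.
rewrite {1}Ex {1}Er T1 T2 Psi_cat -catA.
move: Hc; rewrite /colX.
have [A1 _] := loc_prop H1; have [B1 _] := loc_prop H2. rewrite size_map in A1 B1.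
set k1 := (loc _ (size x)).1. set k2 := (loc _ (size (x ++ y))).1.
set o1 := (loc _ (size x)).2. set o2 := (loc _ (size (x ++ y))).2.
case: ltnP => K1; case: ltnP => K2 // Hc.
- case: Hc => En Eo. rewrite Eo (nth_map d0) // (nth_map d0 [::] psi K2) En.
  rewrite (drop_nth d0 K2) /Psi /=. congr (_ ++ _). by rewrite catA cat_take_drop.
- have -> : k1 = size X by lia. have -> : k2 = size X by lia.
  rewrite !nth_default ?size_map // !drop_oversize //; lia.
Qed.

Lemma col_cat X1 X2 p : colX (X1 ++ X2) (size (Psi X1) + p) = colX X2 p.
Proof.
rewrite /colX /Psi map_cat loc_cat /= !size_map size_cat ltn_add2l nth_cat.
by rewrite (ltnNge (size X1 + _)) leq_addr /= addKn.
Qed.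

Lemma size_Psi Y : (forall d, d \in Y -> psi d <> [::]) -> size Y <= size (Psi Y).
Proof.
elim: Y => //= d Y IH H. rewrite /Psi /= size_cat -/(Psi Y).
have : 0 < size (psi d) by case Ed: (psi d) (H d (mem_head _ _)).
have := IH (fun e He => H e (mem_behead (s := d :: Y) He)). lia.
Qed.

Lemma glue2 X x y z y' q : (forall d, d \in X -> psi d <> [::]) -> Psi X = x ++ y ++ z ++ y' ++ q ->
  colX X (size x) = colX X (size (x ++ y)) ->
  colX X (size (x ++ y ++ z)) = colX X (size (x ++ y ++ z ++ y')) ->
  exists k1 k4 Dm, x ++ z ++ q = Psi (take k1 X ++ Dm ++ drop k4 X) /\
    subseq Dm (drop k1 (take k4 X)) /\ k1 <= k4 /\ k4 <= size X /\ k4 <= k1 + size (y ++ z ++ y').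
Proof.
move=> Hne EW C1 C2.
set Bl := map psi X.
have P1 : size x <= size (Psi X) by rewrite EW !size_cat; lia.
have P2 : size (x ++ y) <= size (Psi X) by rewrite EW !size_cat; lia.
have P4 : size (x ++ y ++ z ++ y') <= size (Psi X) by rewrite EW !size_cat; lia.
have [A1 [A2 [A3 A4]]] := loc_prop P1.
have [B1 [B2 [B3 B4]]] := loc_prop P2.
have [D1 [D2 [D3 D4]]] := loc_prop P4.
rewrite -/Bl size_map in A1 A2 A3 A4 B1 B2 B3 B4 D1 D2 D3 D4.
set k1 := (loc Bl (size x)).1 in A1 A2 A3 A4 *. set o1 := (loc Bl (size x)).2 in A2 A3 A4 *.
set k2 := (loc Bl (size (x ++ y))).1 in B1 B2 B3 B4 *. set o2 := (loc Bl (size (x ++ y))).2 in B2 B3 B4 *.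
set k4 := (loc Bl (size (x ++ y ++ z ++ y'))).1 in D1 D2 D3 D4 *.
have K12 : k1 <= k2 by apply: loc_mono; rewrite size_cat leq_addr.
have K24 : k2 <= k4 by apply: loc_mono; rewrite !size_cat; lia.
have Eo : o1 = o2.
  move: C1; rewrite /colX -/Bl -/k1 -/k2 -/o1 -/o2.
  case: ltnP => K1; case: ltnP => K2 //; first by case.
  move=> _; rewrite A4 ?B4 //; lia.
have ES1 : size x = size (Psi (take k1 X)) + o1 by rewrite /Psi map_take.
have ES2 : size (x ++ y) = size (Psi (take k2 X)) + o1 by rewrite /Psi map_take Eo.
have EW2 := glue EW C1. rewrite -/Bl -/k1 -/k2 in EW2.
set X2 := take k1 X ++ drop k2 X in EW2.
have Sh : forall t, colX X2 (size x + t) = colX X (size (x ++ y) + t).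
  move=> t. rewrite ES1 ES2 -!addnA col_cat.
  by rewrite -{2}(cat_take_drop k2 X) col_cat.
have C2' : colX X2 (size (x ++ z)) = colX X2 (size ((x ++ z) ++ y')).
  rewrite !size_cat -!addnA !Sh. move: C2; by rewrite !size_cat !addnA.
have EW2' : Psi X2 = (x ++ z) ++ y' ++ q by rewrite -EW2 -!catA.
have EX := glue EW2' C2'.
have Hk1 : size (map psi (take k1 X)) = k1 by rewrite size_map size_takel.
have LX2 : forall t, loc (map psi X2) (size x + t) =
    (k1 + (loc (map psi (drop k2 X)) (o1 + t)).1, (loc (map psi (drop k2 X)) (o1 + t)).2).
  move=> t. rewrite /X2 map_cat ES1 -addnA /Psi map_take -map_take loc_cat Hk1 //.
have LX : forall t, loc Bl (size (x ++ y) + t) =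
    (k2 + (loc (map psi (drop k2 X)) (o1 + t)).1, (loc (map psi (drop k2 X)) (o1 + t)).2).
  move=> t. rewrite /Bl -{1}(cat_take_drop k2 X) map_cat ES2 -addnA /Psi map_take -map_take loc_cat.
  by rewrite size_map size_takel.
set j3 := (loc (map psi (drop k2 X)) (o1 + size z)).1.
set j4 := (loc (map psi (drop k2 X)) (o1 + (size z + size y'))).1.
have J34 : j3 <= j4 by apply: loc_mono; lia.
have E3 : (loc (map psi X2) (size (x ++ z))).1 = k1 + j3 by rewrite size_cat LX2.
have E4 : (loc (map psi X2) (size ((x ++ z) ++ y'))).1 = k1 + j4 by rewrite -catA !size_cat LX2.
have E4' : k4 = k2 + j4 by rewrite /k4 (_ : size (x ++ y ++ z ++ y') = size (x ++ y) + (size z + size y')) ?LX // !size_cat; lia.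
rewrite E3 E4 in EX.
exists k1, k4, (take j3 (drop k2 X)). split.
- have T3 : take (k1 + j3) X2 = take k1 X ++ take j3 (drop k2 X).
    by rewrite /X2 take_cat size_takel // (ltnNge (k1 + j3)) leq_addr /= addKn.
  have T4 : drop (k1 + j4) X2 = drop k4 X.
    by rewrite /X2 drop_cat size_takel // (ltnNge (k1 + j4)) leq_addr /= addKn drop_drop E4' addnC.
  by rewrite catA EX T3 T4 -catA.
- split.
  + rewrite E4' -(take_takel _ J34) take_drop.
    apply: (subseq_trans (take_subseq _ _)).
    have -> : drop k2 (take (j4 + k2) X) = drop (k2 - k1) (drop k1 (take (k2 + j4) X)) by rewrite drop_drop subnK // addnC.
    exact: drop_subseq.
  + split; first lia. split; first lia.
    case: (ltnP k1 k4) => Hk; last lia.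
    have Hk1X : k1 < size X by lia.
    have O1 := A3 Hk1X. rewrite (nth_map d0) // in O1.
    have S1 : size (Psi (take k1.+1 X)) = size (Psi (take k1 X)) + size (psi (nth d0 X k1)).
      by rewrite (take_nth d0 Hk1X) -cats1 Psi_cat size_cat /Psi /= cats0.
    have S2 : size (Psi (take k1.+1 X)) + (k4 - k1.+1) <= size (Psi (take k4 X)).
      rewrite -(cat_take_drop k1.+1 (take k4 X)) take_takel // Psi_cat size_cat leq_add2l.
      have -> : k4 - k1.+1 = size (drop k1.+1 (take k4 X)) by rewrite size_drop size_takel.
      apply: size_Psi => d Hd; apply: Hne; exact: (mem_take (mem_drop Hd)).
    have : size (x ++ y ++ z ++ y') = size (Psi (take k4 X)) + (loc Bl (size (x ++ y ++ z ++ y'))).2.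
      by rewrite {1}D2 /Psi map_take.
    rewrite !size_cat in ES1 *. lia.
Qed.
Lemma colX_bound X p d o : p <= size (Psi X) -> colX X p = Some (d, o) -> o < size (psi d).
Proof.
move=> Hp. have [A1 [A2 [A3 A4]]] := loc_prop Hp. rewrite size_map in A1 A3 A4.
rewrite /colX. case: ltnP => // H [<- <-]. by have := A3 H; rewrite (nth_map d0).
Qed.
End Blocks.


Lemma ex_min (P : nat -> Prop) : (exists k, P k) -> exists k, P k /\ forall j, P j -> k <= j.
Proof.
move=> [k Hk]; elim/ltn_ind: k Hk => k IH Hk.
case: (classic (exists j, j < k /\ P j)) => [[j [Hj Pj]]|H]; first exact: IH Pj.
exists k; split=> // j Pj; rewrite leqNgt; apply/negP => Hjk; apply: H; by exists j.
Qed.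

Lemma inP_mem (T : eqType) (x : T) s : x \in s -> List.In x s.
Proof. elim: s => //= y s IH; rewrite in_cons => /orP [/eqP ->|/IH]; auto. Qed.

Section Geo.
Variables (A : finType) (R : monoid) (f : seq A -> R).
Hypothesis fcat : forall u v, f (u ++ v) = mmul (f u) (f v).
Hypothesis fnil : f [::] = mone R.

Fixpoint words k : seq (seq A) :=
  if k is k'.+1 then [::] :: [seq a :: w | a <- enum A, w <- words k'] else [:: [::]].

Lemma words_mem k w : size w <= k -> w \in words k.
Proof.
elim: k w => [|k IH] [|a w] //=; rewrite ?in_cons ?eqxx // => H.
apply/orP; right. apply/allpairsP; exists (a, w); split => //=; [by rewrite mem_enum | exact: IH].
Qed.

Definition geo (al : seq A) := forall w, f w = f al -> size al <= size w.

Lemma geo_exists n : (forall r, exists w, f w = r) -> infinite_monoid R ->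
  exists al, size al = n /\ geo al.
Proof.
move=> Hgen Hinf.
have [s Hs] : exists s : R, forall w, f w = s -> n <= size w.
  apply: NNPP => Hn. apply: Hinf. exists (map f (words n)) => s.
  have : ~ (forall w, f w = s -> n <= size w) by move=> H; apply: Hn; exists s.
  move/not_all_ex_not => [w Hw']. have [Hw Hsz] := imply_to_and _ _ Hw'.
  rewrite -Hw. apply: List.in_map. apply: inP_mem. apply: words_mem.
  move/negP: Hsz; rewrite -ltnNge; exact: ltnW.
have [k [[w0 [Hk Hw0]] Hmin]] := @ex_min (fun k => exists w, size w = k /\ f w = s)
  (let (w, Hw) := Hgen s in ex_intro _ (size w) (ex_intro _ w (conj erefl Hw))).
have Hnk : n <= k by rewrite -Hk; exact: Hs.
exists (take n w0); split; first by rewrite size_takel // Hk.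
move=> w Hw. have : k <= size (w ++ drop n w0).
  apply: Hmin; exists (w ++ drop n w0); split=> //.
  by rewrite fcat Hw -fcat cat_take_drop.
rewrite size_cat size_drop size_takel; lia.
Qed.

Lemma geo_subseq al l : geo al -> subseq l al -> f l = f al -> l = al.
Proof.
move=> G Hs He. have H := G _ He. have [_ E] := size_subseq_leqif Hs.
by apply/eqP; rewrite -E eqn_leq (size_subseq Hs) H.
Qed.

Lemma geo_nonid al a : geo al -> a \in al -> f [:: a] <> mone R.
Proof.
move=> G Ha E. case/splitPr: Ha G => al1 al2 G.
have := G (al1 ++ al2). rewrite !fcat (_ : a :: al2 = [:: a] ++ al2) // fcat E mmul1.
move/(_ erefl). rewrite !size_cat /=; lia.
Qed.
End Geo.


Lemma mulP (S T : monoid) (p q : prod_monoid S T) : mmul p q = ((mmul p.1 q.1, mmul p.2 q.2) : prod_monoid S T).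
Proof. by []. Qed.
Lemma oneP (S T : monoid) : mone (prod_monoid S T) = (mone S, mone T).
Proof. by []. Qed.

Lemma eval_cat (M : monoid) (A : Type) (gen : A -> M) u v :
  eval_word gen (u ++ v) = mmul (eval_word gen u) (eval_word gen v).
Proof. elim: u => [|a u IH] /=; [by rewrite mmul1 | by rewrite IH mmulA]. Qed.

Lemma pmap_rev (T1 T2 : Type) (f : T1 -> option T2) s : pmap f (rev s) = rev (pmap f s).
Proof.
elim: s => //= x s IH. rewrite rev_cons -cats1 pmap_cat IH /=.
by case: (f x) => [b|] /=; rewrite ?cats0 // rev_cons cats1.
Qed.

Lemma pmap_subseq (T1 T2 : eqType) (f : T1 -> option T2) s1 s2 :
  subseq s1 s2 -> subseq (pmap f s1) (pmap f s2).
Proof.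
elim: s2 s1 => [|x s2 IH] s1.
- by rewrite subseq0 => /eqP ->.
- case: s1 => [|y s1]; first by move=> _; exact: sub0seq.
  rewrite /=. case: eqP => [-> | _] H.
  + have := IH _ H. case: (f x) => [b|] //=. by rewrite eqxx.
  + have := IH _ H => /= H'. apply: (subseq_trans H').
    case: (f x) => [b|] //=. exact: subseq_cons.
Qed.

Lemma pmap_nil_sub (T1 T2 : eqType) (f : T1 -> option T2) s1 s2 :
  subseq s1 s2 -> pmap f s2 = [::] -> pmap f s1 = [::].
Proof. move=> /(pmap_subseq f) H E; rewrite E in H; exact/eqP; rewrite -subseq0. Qed.

Lemma split_uniq (T : eqType) (e : T) l1 l2 m1 m2 : l1 ++ e :: l2 = m1 ++ e :: m2 ->
  e \notin l1 -> e \notin m1 -> l1 = m1 /\ l2 = m2.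
Proof.
elim: l1 m1 => [|a l1 IH] [|b m1] //=.
- by case=> ->.
- by case=> -> _ _; rewrite in_cons eqxx.
- by case=> -> _; rewrite in_cons eqxx.
- case=> -> E; rewrite !in_cons !negb_or => /andP [_ H1] /andP [_ H2].
  by have [-> ->] := IH _ E H1 H2.
Qed.

Lemma subseq_split (T : eqType) (e : T) Y1 Y2 XL XR : subseq (Y1 ++ e :: Y2) (XL ++ e :: XR) ->
  e \notin Y1 -> e \notin XL -> e \notin XR -> subseq Y1 XL /\ subseq Y2 XR.
Proof.
elim: XL Y1 => [|x XL IH] [|y Y1] /=.
- by rewrite eqxx.
- move=> H; rewrite in_cons negb_or => /andP [Hye _] _ HR.
  rewrite eq_sym (negbTE Hye) in H.
  have : e \in XR by apply: (mem_subseq H); rewrite in_cons mem_cat in_cons eqxx !orbT.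
  by rewrite (negbTE HR).
- rewrite in_cons negb_or => H _ /andP [Hxe HL] HR.
  have Hex : (e == x) = false by apply/negbTE.
  rewrite Hex in H. have [_ H2] := IH [::] H isT HL HR. by split.
- rewrite !in_cons !negb_or => H /andP [Hye HY] /andP [Hxe HL] HR.
  case: eqP H => [Exy|Nxy] H.
  + subst. have [H1 H2] := IH Y1 H HY HL HR. by split.
  + have HyY : e \notin y :: Y1 by rewrite in_cons negb_or Hye.
    have [H1 H2] := IH (y :: Y1) H HyY HL HR.
    by split.
Qed.

Section Main.
Variables (S T : monoid) (A : finType) (gen : A -> prod_monoid S T).
Variables (phS phT : A -> seq A).
Hypothesis HphS : forall a, eval_word gen (phS a) = (((gen a).1, mone T) : prod_monoid S T).
Hypothesis HphT : forall a, eval_word gen (phT a) = ((mone S, (gen a).2) : prod_monoid S T).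

Local Notation D := (option (bool * bool * A)).
Definition phi (d : D) : seq A := if d is Some (_, t, a) then (if t then phT a else phS a) else [::].
Definition psi (d : D) : seq (option A) :=
  if d is Some (s, _, _) then (if s then map Some (rev (phi d)) else map Some (phi d)) else [:: None].
Definition gS (d : D) : option A := if d is Some (_, false, a) then Some a else None.
Definition gT (d : D) : option A := if d is Some (_, true, a) then Some a else None.
Definition gtag (s t : bool) (d : D) : option A :=
  if d is Some (s', t', a) then (if (s' == s) && (t' == t) then Some a else None) else None.
Definition isL (d : D) := if d is Some (s, _, _) then ~~ s else false.
Definition isR (d : D) := if d is Some (s, _, _) then s else false.

Lemma eval_phi Y : eval_word gen (flatten (map phi Y)) =
  (((eval_word gen (pmap gS Y)).1, (eval_word gen (pmap gT Y)).2) : prod_monoid S T).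
Proof.
elim: Y => [|d Y IH] //=. rewrite eval_cat IH.
case: d => [[[s t] a]|] /=; last by rewrite !mmul1.
case: t => /=; [rewrite HphT | rewrite HphS]; rewrite /= ?mulP /= !mmul1 //.
Qed.

Lemma Psi_L Y : all isL Y -> Psi psi Y = map Some (flatten (map phi Y)).
Proof.
elim: Y => //= d Y IH /andP [Hd HY]. rewrite /Psi /= -/(Psi psi Y) IH // map_cat.
by case: d Hd => [[[[] t] a]|].
Qed.

Lemma Psi_R Y : all isR Y -> Psi psi Y = map Some (rev (flatten (map phi (rev Y)))).
Proof.
elim: Y => //= d Y IH /andP [Hd HY]. rewrite /Psi /= -/(Psi psi Y) IH //.
rewrite rev_cons map_rcons flatten_rcons rev_cat map_cat.
by case: d Hd => [[[[] t] a]|].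
Qed.

Lemma gS_L Y : all isL Y -> pmap gS Y = pmap (gtag false false) Y.
Proof. elim: Y => //= d Y IH /andP [Hd HY]; rewrite IH //; by case: d Hd => [[[[] []] a]|]. Qed.
Lemma gT_L Y : all isL Y -> pmap gT Y = pmap (gtag false true) Y.
Proof. elim: Y => //= d Y IH /andP [Hd HY]; rewrite IH //; by case: d Hd => [[[[] []] a]|]. Qed.
Lemma gS_R Y : all isR Y -> pmap gS Y = pmap (gtag true false) Y.
Proof. elim: Y => //= d Y IH /andP [Hd HY]; rewrite IH //; by case: d Hd => [[[[] []] a]|]. Qed.
Lemma gT_R Y : all isR Y -> pmap gT Y = pmap (gtag true true) Y.
Proof. elim: Y => //= d Y IH /andP [Hd HY]; rewrite IH //; by case: d Hd => [[[[] []] a]|]. Qed.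
Lemma gR_L t Y : all isL Y -> pmap (gtag true t) Y = [::].
Proof. elim: Y => //= d Y IH /andP [Hd HY]; rewrite IH //; by case: d Hd => [[[[] []] a]|]. Qed.
Lemma gL_R t Y : all isR Y -> pmap (gtag false t) Y = [::].
Proof. elim: Y => //= d Y IH /andP [Hd HY]; rewrite IH //; by case: d Hd => [[[[] []] a]|]. Qed.

Lemma pmap_tag s t s' t' l : pmap (gtag s t) (map (fun a => Some (s', t', a)) l) =
  if (s' == s) && (t' == t) then l else [::].
Proof. elim: l => [|a l IH] /=; first by case: ifP. by rewrite IH; case: ifP. Qed.

Lemma size_decomp (s : seq D) : size s = size (pmap (gtag false false) s) + size (pmap (gtag false true) s) +
  size (pmap (gtag true false) s) + size (pmap (gtag true true) s) + count (pred1 None) s.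
Proof. elim: s => //= d s ->. case: d => [[[[] []] a]|] /=; lia. Qed.

Lemma None_Psi Y : None \in Psi psi Y -> None \in Y.
Proof.
elim: Y => //= d Y IH. rewrite /Psi /= -/(Psi psi Y) mem_cat in_cons => /orP [H|/IH ->]; last by rewrite orbT.
case: d H => [[[[] t] a]|] //= /mapP [? _ //].
Qed.

Definition L1 (a : A) : D := Some (false, false, a).
Definition L2 (a : A) : D := Some (false, true, a).
Definition R1 (a : A) : D := Some (true, false, a).
Definition R2 (a : A) : D := Some (true, true, a).
Definition XL al be := map L1 al ++ map L2 be.
Definition XR al be := map R1 (rev al) ++ map R2 (rev be).
Definition Xw al be := XL al be ++ None :: XR al be.

Lemma pS1 l : pmap gS (map L1 l) = l. Proof. by elim: l => //= a l ->. Qed.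
Lemma pS2 l : pmap gS (map L2 l) = [::]. Proof. by elim: l. Qed.
Lemma pS3 l : pmap gS (map R1 l) = l. Proof. by elim: l => //= a l ->. Qed.
Lemma pS4 l : pmap gS (map R2 l) = [::]. Proof. by elim: l. Qed.
Lemma pT1 l : pmap gT (map L1 l) = [::]. Proof. by elim: l. Qed.
Lemma pT2 l : pmap gT (map L2 l) = l. Proof. by elim: l => //= a l ->. Qed.
Lemma pT3 l : pmap gT (map R1 l) = [::]. Proof. by elim: l. Qed.
Lemma pT4 l : pmap gT (map R2 l) = l. Proof. by elim: l => //= a l ->. Qed.

Lemma allL al be : all isL (XL al be).
Proof. by rewrite all_cat !all_map; apply/andP; split; apply/allP. Qed.
Lemma allR al be : all isR (XR al be).
Proof. by rewrite all_cat !all_map; apply/andP; split; apply/allP. Qed.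
Lemma None_XL al be : None \notin XL al be.
Proof. by rewrite mem_cat; apply/norP; split; apply/mapP => [[? _]]. Qed.
Lemma None_XR al be : None \notin XR al be.
Proof. by rewrite mem_cat; apply/norP; split; apply/mapP => [[? _]]. Qed.

Lemma WP_X al be : (eval_word gen al).1 = (eval_word gen al).1 ->
  word_problem gen (Psi psi (Xw al be)).
Proof.
move=> _. exists (flatten (map phi (XL al be))), (flatten (map phi (rev (XR al be)))).
split.
- rewrite !eval_phi /XL /XR rev_cat !map_rev !revK !pmap_cat.
  by rewrite pS1 pS2 pS3 pS4 pT1 pT2 pT3 pT4 /= !cats0.
- rewrite /Xw Psi_cat /Psi /= -!/(Psi psi _) Psi_L ?allL // Psi_R ?allR // revK.
Qed.

Lemma Psi_X_ne al be : geo (fun w => (eval_word gen w).1) al -> geo (fun w => (eval_word gen w).2) be ->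
  forall d, d \in Xw al be -> psi d <> [::].
Proof.
move=> Ga Gb d. rewrite /Xw /XL /XR !mem_cat in_cons mem_cat.
have eS : forall u v, (eval_word gen (u ++ v)).1 = mmul (eval_word gen u).1 (eval_word gen v).1.
  by move=> u v; rewrite eval_cat.
have eT : forall u v, (eval_word gen (u ++ v)).2 = mmul (eval_word gen u).2 (eval_word gen v).2.
  by move=> u v; rewrite eval_cat.
have HS : forall a, a \in al -> phS a <> [::].
  move=> a Ha E. apply: (geo_nonid eS Ga Ha). rewrite /= mmulm1.
  by have := congr1 fst (HphS a); rewrite E /= => <-.
have HT : forall a, a \in be -> phT a <> [::].
  move=> a Ha E. apply: (geo_nonid eT Gb Ha). rewrite /= mmulm1.
  by have := congr1 snd (HphT a); rewrite E /= => <-.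
move=> /orP [/orP [/mapP [a Ha ->]|/mapP [a Ha ->]]|/orP [/eqP -> //|/orP [/mapP [a Ha ->]|/mapP [a Ha ->]]]] /=.
- by case E: (phS a) (HS a Ha).
- by case E: (phT a) (HT a Ha).
- rewrite mem_rev in Ha. move=> E. apply: (HS a Ha). apply/eqP. rewrite -size_eq0 -size_rev.
  by move/(congr1 size): E; rewrite size_map => ->.
- rewrite mem_rev in Ha. move=> E. apply: (HT a Ha). apply/eqP. rewrite -size_eq0 -size_rev.
  by move/(congr1 size): E; rewrite size_map => ->.
Qed.

Lemma gtL1 s t l : pmap (gtag s t) (map L1 l) = if (false == s) && (false == t) then l else [::].
Proof. elim: l => [|a l IH] /=; first by case: ifP. by rewrite IH; case: ifP. Qed.
Lemma gtL2 s t l : pmap (gtag s t) (map L2 l) = if (false == s) && (true == t) then l else [::].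
Proof. elim: l => [|a l IH] /=; first by case: ifP. by rewrite IH; case: ifP. Qed.
Lemma gtR1 s t l : pmap (gtag s t) (map R1 l) = if (true == s) && (false == t) then l else [::].
Proof. elim: l => [|a l IH] /=; first by case: ifP. by rewrite IH; case: ifP. Qed.
Lemma gtR2 s t l : pmap (gtag s t) (map R2 l) = if (true == s) && (true == t) then l else [::].
Proof. elim: l => [|a l IH] /=; first by case: ifP. by rewrite IH; case: ifP. Qed.

Lemma core al be n k1 k4 Dm u' v' :
  size al = n -> size be = n ->
  geo (fun w => (eval_word gen w).1) al -> geo (fun w => (eval_word gen w).2) be ->
  k1 <= k4 -> k4 <= size (Xw al be) -> k4 < k1 + n -> subseq Dm (drop k1 (take k4 (Xw al be))) ->
  eval_word gen u' = eval_word gen v' ->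
  Psi psi (take k1 (Xw al be) ++ Dm ++ drop k4 (Xw al be)) = map Some u' ++ None :: map Some (rev v') ->
  take k1 (Xw al be) ++ Dm ++ drop k4 (Xw al be) = Xw al be.
Proof.
move=> Hal Hbe Ga Gb Hk14 Hk4X Hk4 HDm Huv EW.
have FXff : pmap (gtag false false) (Xw al be) = al.
  by rewrite /Xw /XL /XR !pmap_cat /= ?pmap_cat ?gtL1 ?gtL2 ?gtR1 ?gtR2 /= ?cats0.
have FXtf : pmap (gtag true false) (Xw al be) = rev al.
  by rewrite /Xw /XL /XR !pmap_cat /= ?pmap_cat ?gtL1 ?gtL2 ?gtR1 ?gtR2 /= ?cats0.
have FXft : pmap (gtag false true) (Xw al be) = be.
  by rewrite /Xw /XL /XR !pmap_cat /= ?pmap_cat ?gtL1 ?gtL2 ?gtR1 ?gtR2 /= ?cats0.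
have FXtt : pmap (gtag true true) (Xw al be) = rev be.
  by rewrite /Xw /XL /XR !pmap_cat /= ?pmap_cat ?gtL1 ?gtL2 ?gtR1 ?gtR2 /= ?cats0.
have ZLS : n <= k1 -> pmap (gtag false false) (drop k1 (Xw al be)) = [::].
  move=> H. rewrite /Xw /XL -catA drop_cat size_map Hal ltnNge H /=.
  apply: (pmap_nil_sub (drop_subseq _ _)). by rewrite !pmap_cat /= ?pmap_cat ?gtL2 ?gtR1 ?gtR2.
have ZLT : n + n <= k1 -> pmap (gtag false true) (drop k1 (Xw al be)) = [::].
  move=> H. rewrite /Xw /XL drop_cat size_cat !size_map Hal Hbe ltnNge H /=.
  apply: (pmap_nil_sub (drop_subseq _ _)). by rewrite /= /XR !pmap_cat ?gtR1 ?gtR2.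
have ZRS : k4 <= n + n + 1 -> pmap (gtag true false) (take k4 (Xw al be)) = [::].
  move=> H. have -> : Xw al be = (map L1 al ++ map L2 be ++ [:: None]) ++ XR al be by rewrite /Xw /XL -!catA.
  rewrite takel_cat; last by rewrite !size_cat !size_map Hal Hbe /=; lia.
  apply: (pmap_nil_sub (take_subseq _ _)). by rewrite !pmap_cat /= ?pmap_cat ?gtL1 ?gtL2.
have ZRT : k4 <= n + n + 1 + n -> pmap (gtag true true) (take k4 (Xw al be)) = [::].
  move=> H. have -> : Xw al be = (map L1 al ++ map L2 be ++ None :: map R1 (rev al)) ++ map R2 (rev be).
    by rewrite /Xw /XL /XR -!catA.
  rewrite takel_cat; last by rewrite !size_cat /= !size_map size_rev Hal Hbe; lia.
  apply: (pmap_nil_sub (take_subseq _ _)). by rewrite !pmap_cat /= ?pmap_cat ?gtL1 ?gtL2 ?gtR1.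
set X := Xw al be in Hk4X HDm EW FXff FXtf FXft FXtt ZLS ZLT ZRS ZRT *.
set X' := take k1 X ++ Dm ++ drop k4 X in EW *.
have EX : X = take k1 X ++ drop k1 (take k4 X) ++ drop k4 X.
  by rewrite catA -{1}(take_takel X Hk14) !cat_take_drop.
have Hsub : subseq X' X.
  rewrite {1}EX. apply: cat_subseq => //. exact: cat_subseq.
have ED1 : drop k1 X = drop k1 (take k4 X) ++ drop k4 X.
  rewrite {1}EX drop_cat size_takel; last lia.
  by rewrite ltnn subnn drop0.
have ET4 : take k4 X = take k1 X ++ drop k1 (take k4 X) by rewrite -{1}(take_takel X Hk14) cat_take_drop.
have Z1 : forall g : D -> option A, pmap g (drop k1 X) = [::] -> pmap g X' = pmap g X.
  move=> g; rewrite ED1 pmap_cat => H.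
  have H1 : pmap g (drop k1 (take k4 X)) = [::] by case: (pmap g (drop k1 (take k4 X))) H.
  have H2 : pmap g (drop k4 X) = [::] by move: H; rewrite H1.
  by rewrite /X' {3}EX !pmap_cat (pmap_nil_sub HDm H1) H1 H2.
have Z2 : forall g : D -> option A, pmap g (take k4 X) = [::] -> pmap g X' = pmap g X.
  move=> g; rewrite ET4 pmap_cat => H.
  have H1 : pmap g (take k1 X) = [::] by case: (pmap g (take k1 X)) H.
  have H2 : pmap g (drop k1 (take k4 X)) = [::] by move: H; rewrite H1.
  by rewrite /X' {3}EX !pmap_cat (pmap_nil_sub HDm H2) H1 H2.
have HN : None \in X' by apply: None_Psi; rewrite EW mem_cat in_cons eqxx orbT.
set i := index None X'.
have EX' : X' = take i X' ++ None :: drop i.+1 X'.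
  by rewrite -{1}(cat_take_drop i X') (drop_nth None) ?index_mem // nth_index.
have HY1 : None \notin take i X' by rewrite in_take // ltnn.
set Y1 := take i X' in EX' HY1. set Y2 := drop i.+1 X' in EX'.
have [S1 S2] : subseq Y1 (XL al be) /\ subseq Y2 (XR al be).
  apply: subseq_split HY1 (None_XL al be) (None_XR al be). by rewrite -EX'.
have AL : all isL Y1 by apply/allP => d /(mem_subseq S1) Hd; exact: (allP (allL al be)) d Hd.
have AR : all isR Y2 by apply/allP => d /(mem_subseq S2) Hd; exact: (allP (allR al be)) d Hd.
have EW2 : Psi psi X' = map Some (flatten (map phi Y1)) ++ None :: map Some (rev (flatten (map phi (rev Y2)))).
  by rewrite {1}EX' Psi_cat Psi_L // /Psi /= -/(Psi psi Y2) Psi_R.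
rewrite EW2 in EW.
have NS : forall l : seq A, None \notin map Some l by move=> l; apply/mapP => [[? _]].
have [Eu Ev] := split_uniq EW (NS _) (NS _).
have Eu' := inj_map (@Some_inj _) Eu. have Ev' := inj_map (@Some_inj _) Ev.
have Ev'' : flatten (map phi (rev Y2)) = v' by rewrite -(revK v') -Ev' revK.
rewrite -Eu' -Ev'' !eval_phi in Huv.
have E1 := congr1 fst Huv. have E2 := congr1 snd Huv. simpl in E1, E2.
have PX' : forall s t, pmap (gtag s t) X' = pmap (gtag s t) Y1 ++ pmap (gtag s t) Y2.
  by move=> s t; rewrite {1}EX' pmap_cat.
have E1' : (eval_word gen (pmap (gtag false false) X')).1 = (eval_word gen (rev (pmap (gtag true false) X'))).1.
  by rewrite !PX' (gL_R _ AR) (gR_L _ AL) cats0 /= -(gS_L AL) -(gS_R AR) -pmap_rev.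
have E2' : (eval_word gen (pmap (gtag false true) X')).2 = (eval_word gen (rev (pmap (gtag true true) X'))).2.
  by rewrite !PX' (gL_R _ AR) (gR_L _ AL) cats0 /= -(gT_L AL) -(gT_R AR) -pmap_rev.
have FS1 : subseq (pmap (gtag false false) X') al by rewrite -FXff; exact: pmap_subseq Hsub.
have FS2 : subseq (rev (pmap (gtag true false) X')) al.
  by rewrite -(revK al) subseq_rev -FXtf; exact: pmap_subseq Hsub.
have FT1 : subseq (pmap (gtag false true) X') be by rewrite -FXft; exact: pmap_subseq Hsub.
have FT2 : subseq (rev (pmap (gtag true true) X')) be.
  by rewrite -(revK be) subseq_rev -FXtt; exact: pmap_subseq Hsub.
have HSS : pmap (gtag false false) X' = al /\ pmap (gtag true false) X' = rev al.
  have Hcase : pmap (gtag false false) X' = al \/ pmap (gtag true false) X' = rev al.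
    case: (leqP n k1) => H.
    - left. by rewrite (Z1 _ (ZLS H)) FXff.
    - right. have H' : k4 <= n + n + 1 by clear -H Hk4; lia.
      by rewrite (Z2 _ (ZRS H')) FXtf.
  case: Hcase => H.
  - have H' : rev (pmap (gtag true false) X') = al.
      apply: (geo_subseq Ga FS2). by rewrite /= -E1' H.
    split=> //. by rewrite -H' revK.
  - have H' : pmap (gtag false false) X' = al.
      apply: (geo_subseq Ga FS1). by rewrite /= E1' H revK.
    by split.
have HTT : pmap (gtag false true) X' = be /\ pmap (gtag true true) X' = rev be.
  have Hcase : pmap (gtag false true) X' = be \/ pmap (gtag true true) X' = rev be.
    case: (leqP k4 (n + n + 1 + n)) => H.
    - right. by rewrite (Z2 _ (ZRT H)) FXtt.
    - left. have H' : n + n <= k1 by clear -H Hk4; lia.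
      by rewrite (Z1 _ (ZLT H')) FXft.
  case: Hcase => H.
  - have H' : rev (pmap (gtag true true) X') = be.
      apply: (geo_subseq Gb FT2). by rewrite /= -E2' H.
    split=> //. by rewrite -H' revK.
  - have H' : pmap (gtag false true) X' = be.
      apply: (geo_subseq Gb FT1). by rewrite /= E2' H revK.
    by split.
have SX : size X = n + n + 1 + n + n.
  rewrite /X /Xw /XL /XR !size_cat /= !size_cat !size_map !size_rev Hal Hbe. clear; lia.
have SX' := size_decomp X'.
case: HSS => E1s E2s. case: HTT => E1t E2t.
rewrite E1s E2s E1t E2t !size_rev Hal Hbe in SX'.
have Hc : 0 < count (pred1 None) X' by rewrite -has_count has_pred1.
have [Hle Heq] := size_subseq_leqif Hsub.
apply/eqP; rewrite -Heq eqn_leq Hle /=. clear -SX SX' Hc; lia.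
Qed.

End Main.


Theorem mainTheorem6 (S T : monoid) :
  infinite_monoid S -> infinite_monoid T -> ~ UCF (prod_monoid S T).
Proof.
move=> HS HT [A [gen [_ [Hgen [G HG]]]]].
pose fS := fun w : seq A => (eval_word gen w).1.
pose fT := fun w : seq A => (eval_word gen w).2.
have fScat : forall u v, fS (u ++ v) = mmul (fS u) (fS v) by move=> u v; rewrite /fS eval_cat.
have fTcat : forall u v, fT (u ++ v) = mmul (fT u) (fT v) by move=> u v; rewrite /fT eval_cat.
have fSgen : forall s, exists w, fS w = s.
  move=> s; have [w Hw] := Hgen ((s, mone T) : prod_monoid S T); exists w; by rewrite /fS Hw.
have fTgen : forall t, exists w, fT w = t.
  move=> t; have [w Hw] := Hgen ((mone S, t) : prod_monoid S T); exists w; by rewrite /fT Hw.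
have [phS HphS] : {f : A -> seq A | forall a, eval_word gen (f a) = (((gen a).1, mone T) : prod_monoid S T)}.
  have H : forall a, {w : seq A | eval_word gen w = (((gen a).1, mone T) : prod_monoid S T)}.
    move=> a; apply: constructive_indefinite_description; exact: Hgen.
  by exists (fun a => sval (H a)) => a; exact: (svalP (H a)).
have [phT HphT] : {f : A -> seq A | forall a, eval_word gen (f a) = ((mone S, (gen a).2) : prod_monoid S T)}.
  have H : forall a, {w : seq A | eval_word gen w = ((mone S, (gen a).2) : prod_monoid S T)}.
    move=> a; apply: constructive_indefinite_description; exact: Hgen.
  by exists (fun a => sval (H a)) => a; exact: (svalP (H a)).
pose D := option (bool * bool * A).
pose K := (\max_(d : D) size (psi phS phT d)).+1.
pose F : finType := option (D * 'I_K).
pose n := (PP G F).+1.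
have [al [Hal Gal]] := geo_exists fScat n fSgen HS.
have [be [Hbe Gbe]] := geo_exists fTcat n fTgen HT.
pose X := Xw al be.
pose colF := fun p => (omap (fun do : D * nat => (do.1, inord do.2 : 'I_K)) (colX (psi phS phT) None X p) : F).
have Hne := Psi_X_ne HphS HphT Gal Gbe.
have HW : cfg_lang G (Psi (psi phS phT) X) by apply/HG; exact: (WP_X HphS HphT be (erefl _)).
have HsW : PP G F < size (Psi (psi phS phT) X).
  apply: leq_trans (size_Psi Hne).
  rewrite /X /Xw /XL /XR !size_cat /= !size_cat !size_map !size_rev Hal Hbe /n. clear; lia.
have [x [y [z [y' [q [EW [Hyy [Hsz [C1 [C2 HL']]]]]]]]]] := pumping colF HW HsW.
have inj : forall p1 p2, p1 <= size (Psi (psi phS phT) X) -> p2 <= size (Psi (psi phS phT) X) ->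
    colF p1 = colF p2 -> colX (psi phS phT) None X p1 = colX (psi phS phT) None X p2.
  move=> p1 p2 H1 H2. rewrite /colF.
  case E1: (colX _ _ X p1) => [[d1 o1]|]; case E2: (colX _ _ X p2) => [[d2 o2]|] //= [Ed Eo].
  have B1 := colX_bound H1 E1. have B2 := colX_bound H2 E2.
  have M1 : size (psi phS phT d1) < K by rewrite /K ltnS; exact: leq_bigmax.
  have M2 : size (psi phS phT d2) < K by rewrite /K ltnS; exact: leq_bigmax.
  have O1 : o1 < K := ltn_trans B1 M1. have O2 : o2 < K := ltn_trans B2 M2.
  have : o1 = o2 by have := congr1 val Eo; rewrite /= (inordK O1) (inordK O2).
  by move=> ->; rewrite Ed.
have SP : forall (a b : seq (option A)), size a <= size (a ++ b) by move=> a b; rewrite size_cat leq_addr.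
have C1' : colX (psi phS phT) None X (size x) = colX (psi phS phT) None X (size (x ++ y)).
  apply: inj C1; rewrite EW.
  - exact: SP.
  - rewrite catA; exact: SP.
have C2' : colX (psi phS phT) None X (size (x ++ y ++ z)) = colX (psi phS phT) None X (size (x ++ y ++ z ++ y')).
  apply: inj C2; rewrite EW.
  - have -> : x ++ y ++ z ++ y' ++ q = (x ++ y ++ z) ++ (y' ++ q) by rewrite !catA.
    exact: SP.
  - have -> : x ++ y ++ z ++ y' ++ q = (x ++ y ++ z ++ y') ++ q by rewrite !catA.
    exact: SP.
have [k1 [k4 [Dm [EW' [HDm [Hk14 [Hk4X Hk4]]]]]]] := glue2 Hne EW C1' C2'.
have [u' [v' [Huv Ew']]] : word_problem gen (x ++ z ++ q) by apply/HG.
rewrite EW' in Ew'.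
have Hk4' : k4 < k1 + n by apply: leq_ltn_trans Hk4 _; rewrite ltn_add2l ltnS.
have EX := core HphS HphT Hal Hbe Gal Gbe Hk14 Hk4X Hk4' HDm Huv Ew'.
rewrite -/X EX in EW'.
have E := etrans EW' EW.
move/(congr1 size): E; rewrite !size_cat => E.
apply: Hyy. have : size y + size y' = 0.
  move: E; set a := size x; set b := size y; set c := size z; set d := size y'; set e := size q => E. clear -E; lia.
by case: y {E EW EW' Hsz C1 C1' C2 C2' Hk4 Hk4'} => //; case: y'.
Qed.
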